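(* Let $\tau\in(3,5)$, $c_w>0$, and $w_i=c_w(N/i)^{1/(\tau-1)}$ for $i\in[N]$. Take $\beta=\beta_{c,N}={\rm asinh}(1/\nu_N)$ and $\lambda=(\tau-2)/(\tau-1)$ in the definition of $G_N$. Then for every $z,r\in\mathbb R$, \[ \lim_{N\to\infty}N\,G_N(z/N^{1/(\tau-1)};r)=-zr\sqrt{\frac{\mathbb E[W]}{\nu}}+f\Big(\sqrt{\frac{\mathbb E[W]}{\nu}}\,z\Big), \] where $f(x)=\sum_{i\ge1}\Big(\frac12\big(\frac{\tau-2}{\tau-1}x\,i^{-1/(\tau-1)}\big)^2-\log\cosh\big(\frac{\tau-2}{\tau-1}x\,i^{-1/(\tau-1)}\big)\Big)$.
   Context: $W_N=w_{U_N}$ with $U_N$ uniform on $[N]$; for these weights $W_N$ converges in distribution to $W$ with $\mathbb P(W>w)=(w/c_w)^{-(\tau-1)}$ for $w\ge c_w$, and $\mathbb E[W_N]\to\mathbb E[W]=c_w\frac{\tau-1}{\tau-2}$, $\mathbb E[W_N^2]\to\mathbb E[W^2]<\infty$. $\nu=\mathbb E[W^2]/\mathbb E[W]$, $\nu_N=\mathbb E[W_N^2]/\mathbb E[W_N]$, $\alpha_N(\beta)=\sqrt{\sinh(\beta)/\mathbb E[W_N]}$, and $G_N(z;r)=\frac12z^2-\frac1N\sum_{i\in[N]}\log\cosh\big(\alpha_N(\beta)w_iz+r/N^\lambda\big)$. *)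

(* Defs.v *)
From Stdlib Require Import Reals List.
Import ListNotations.
Open Scope R_scope.

Definition asinh (x : R) : R := ln (x + sqrt (x ^ 2 + 1)).

Definition sumN (N : nat) (g : nat -> R) : R :=
  fold_right Rplus 0 (map g (seq 1 N)).

Definition wgt (tau cw : R) (N i : nat) : R :=
  cw * Rpower (INR N / INR i) (1 / (tau - 1)).

(* E[W_N] and E[W_N^2] for W_N = w_{U_N}, U_N uniform on [N] *)
Definition EWN (tau cw : R) (N : nat) : R :=
  / INR N * sumN N (fun i => wgt tau cw N i).
Definition EWN2 (tau cw : R) (N : nat) : R :=
  / INR N * sumN N (fun i => (wgt tau cw N i) ^ 2).
Definition nuN (tau cw : R) (N : nat) : R := EWN2 tau cw N / EWN tau cw N.

(* Limit quantities for W with P(W > w) = (w/c_w)^{-(tau-1)}, w >= c_w *)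
Definition EW (tau cw : R) : R := cw * (tau - 1) / (tau - 2).
Definition EW2 (tau cw : R) : R := cw ^ 2 * (tau - 1) / (tau - 3).
Definition nu (tau cw : R) : R := EW2 tau cw / EW tau cw.

Definition betacN (tau cw : R) (N : nat) : R := asinh (/ nuN tau cw N).

Definition alphaN (tau cw beta : R) (N : nat) : R :=
  sqrt (sinh beta / EWN tau cw N).

Definition GN (tau cw beta lambda : R) (N : nat) (z r : R) : R :=
  / 2 * z ^ 2
  - / INR N * sumN N (fun i =>
      ln (cosh (alphaN tau cw beta N * wgt tau cw N i * z
                + r / Rpower (INR N) lambda))).

(* i-th term (i >= 1) of the series defining f *)
Definition fterm (tau x : R) (i : nat) : R :=
  let a := (tau - 2) / (tau - 1) * x * Rpower (INR i) (- (1 / (tau - 1))) in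
  / 2 * a ^ 2 - ln (cosh a).

(* Main.v *)
Require Import Defs.
From Stdlib Require Import Reals Lra Lia Psatz List.
From Coquelicot Require Import Coquelicot.
Open Scope R_scope.

Lemma MVT_all (f df : R -> R) a b :
  (forall x, is_derive f x (df x)) ->
  exists c, Rmin a b <= c <= Rmax a b /\ f b - f a = df c * (b - a).
Proof.
  intros H. apply MVT_gen.
  - intros x _. apply H.
  - intros x _. apply derivable_continuous_pt. exists (df x).
    apply is_derive_Reals. apply H.
Qed.

Lemma minmax_abs a b c : Rmin a b <= c <= Rmax a b -> Rabs c <= Rabs a + Rabs b.
Proof. unfold Rmin, Rmax; destruct (Rle_dec a b); intros; split_Rabs; lra. Qed.

Lemma minmax_abs0 b c : Rmin 0 b <= c <= Rmax 0 b -> Rabs c <= Rabs b.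
Proof. unfold Rmin, Rmax; destruct (Rle_dec 0 b); intros; split_Rabs; lra. Qed.

Lemma cosh_pos x : 0 < cosh x.
Proof. unfold cosh. generalize (exp_pos x) (exp_pos (-x)). lra. Qed.

Definition th x := sinh x / cosh x.

Lemma dL x : is_derive (fun x => ln (cosh x)) x (th x).
Proof. unfold th, cosh, sinh. auto_derive.
 all: generalize (exp_pos x) (exp_pos (-x)); intros. lra. field. lra. Qed.

Lemma dth x : is_derive th x (1 - th x ^ 2).
Proof. unfold th, cosh, sinh. auto_derive.
 all: generalize (exp_pos x) (exp_pos (-x)); intros. lra. field. lra. Qed.

Lemma th_bound x : Rabs (th x) <= 1.
Proof. unfold th. generalize (cosh_pos x); intro.
  assert (cosh x - sinh x > 0). { unfold cosh, sinh. generalize (exp_pos (-x)); lra. }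
  assert (cosh x + sinh x > 0). { unfold cosh, sinh. generalize (exp_pos x); lra. }
  rewrite Rabs_div by lra. rewrite (Rabs_right (cosh x)) by lra.
  apply Rmult_le_reg_r with (cosh x); [lra|]. field_simplify; [|lra].
  split_Rabs; lra.
Qed.

Lemma th0 : th 0 = 0.
Proof. unfold th, sinh. rewrite Ropp_0. lra. Qed.

Lemma th_le x : Rabs (th x) <= Rabs x.
Proof.
  destruct (MVT_all th (fun x => 1 - th x ^ 2) 0 x dth) as [c [_ Hc]].
  rewrite th0 in Hc. replace (th x) with ((1 - th c ^2) * x) by lra.
  rewrite Rabs_mult. generalize (th_bound c); intro.
  assert (0 <= 1 - th c ^ 2 <= 1).
  { rewrite <- (pow2_abs (th c)). generalize (Rabs_pos (th c)). nra. }
  rewrite Rabs_right by lra. generalize (Rabs_pos x); nra.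
Qed.

Lemma dphi x : is_derive (fun x => x - th x) x (th x ^ 2).
Proof. replace (th x ^2) with (1 - (1 - th x ^2)) by ring.
  apply (is_derive_minus (fun x => x) th). auto_derive; auto; ring. apply dth. Qed.

Lemma sq_abs_le a b : Rabs a <= Rabs b -> a ^ 2 <= b ^ 2.
Proof. intros. rewrite <- (pow2_abs a), <- (pow2_abs b).
  generalize (Rabs_pos a). nra. Qed.

Lemma phi_cube x : Rabs (x - th x) <= Rabs x ^ 3.
Proof.
  destruct (MVT_all _ _ 0 x dphi) as [c [Hc1 Hc]].
  rewrite th0 in Hc. replace (x - th x) with (th c ^2 * x) by lra.
  apply minmax_abs0 in Hc1. generalize (th_le c); intro.
  rewrite Rabs_mult. rewrite Rabs_right by nra.
  assert (th c ^2 <= x^2). { apply sq_abs_le. lra. }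
  rewrite <- (pow2_abs x) in H0. generalize (Rabs_pos x). nra.
Qed.

Lemma phi_sq x : Rabs (x - th x) <= x ^ 2.
Proof.
  destruct (MVT_all _ _ 0 x dphi) as [c [Hc1 Hc]].
  rewrite th0 in Hc. replace (x - th x) with (th c ^2 * x) by lra.
  apply minmax_abs0 in Hc1. generalize (th_le c) (th_bound c); intros.
  rewrite Rabs_mult. rewrite Rabs_right by nra.
  rewrite <- (pow2_abs x). generalize (Rabs_pos x) (Rabs_pos (th c)); intros.
  destruct (Rle_dec (Rabs x) 1).
  - assert (th c ^2 <= Rabs x ^ 2). { rewrite <- (pow2_abs (th c)). nra. } nra.
  - assert (th c ^2 <= 1). { rewrite <- (pow2_abs (th c)). nra. } nra.
Qed.

Definition g x := / 2 * x ^ 2 - ln (cosh x).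

Lemma dg x : is_derive g x (x - th x).
Proof. unfold g. apply (is_derive_minus (fun x => /2*x^2) (fun x => ln (cosh x))). auto_derive; auto; lra. apply dL. Qed.

Lemma g0 : g 0 = 0.
Proof. unfold g. unfold cosh. rewrite Ropp_0, exp_0.
  replace ((1+1)/2) with 1 by field. rewrite ln_1. ring. Qed.

Lemma g_nonneg x : 0 <= g x.
Proof.
  destruct (MVT_all _ _ 0 x dg) as [c [Hc1 Hc]].
  rewrite g0 in Hc. replace (g x) with ((c - th c) * x) by lra.
  generalize (th_le c); intro. unfold Rmin, Rmax in Hc1.
  destruct (Rle_dec 0 x); split_Rabs; nra.
Qed.

Lemma g_bound x : g x <= x ^ 4.
Proof.
  destruct (MVT_all _ _ 0 x dg) as [c [Hc1 Hc]].
  rewrite g0 in Hc. replace (g x) with ((c - th c) * x) by lra.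
  apply minmax_abs0 in Hc1. generalize (phi_cube c); intro.
  apply Rle_trans with (Rabs ((c - th c) * x)). apply Rle_abs.
  rewrite Rabs_mult. generalize (Rabs_pos c) (Rabs_pos x) (Rabs_pos (c - th c)); intros.
  replace (x^4) with (Rabs x ^ 4) by (replace (x^4) with ((x^2)^2) by ring; rewrite <- (pow2_abs x); ring).
  assert (Rabs c ^ 3 <= Rabs x ^ 3). { apply pow_incr. lra. } nra.
Qed.

Lemma g_lip x y : Rabs (g x - g y) <= (Rabs x + Rabs y) ^ 3 * Rabs (x - y).
Proof.
  destruct (MVT_all _ _ y x dg) as [c [Hc1 Hc]].
  rewrite Hc. apply minmax_abs in Hc1. rewrite Rabs_mult.
  generalize (phi_cube c) (Rabs_pos c) (Rabs_pos (x - y)) (Rabs_pos x) (Rabs_pos y); intros.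
  assert (Rabs c ^ 3 <= (Rabs y + Rabs x) ^ 3). { apply pow_incr. lra. }
  rewrite (Rplus_comm (Rabs x)). nra.
Qed.

Lemma L_taylor x e : Rabs (ln (cosh (x + e)) - ln (cosh x) - e * th x) <= e ^ 2.
Proof.
  assert (H: forall t, is_derive (fun t => ln (cosh (x + t)) - t * th x) t (th (x + t) - th x)).
  { intro t. apply (is_derive_minus (fun t => ln (cosh (x + t))) (fun t => t * th x)).
    - assert (Hc := is_derive_comp (fun u => ln (cosh u)) (fun t => x + t) t (th (x + t)) 1 (dL (x + t))).
      replace (th (x + t)) with (scal 1 (th (x + t))). apply Hc.
      auto_derive; auto; lra. exact (Rmult_1_l _).
    - auto_derive; auto; lra. }
  destruct (MVT_all _ _ 0 e H) as [c [Hc1 Hc]].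
  replace (x + 0) with x in Hc by ring.
  replace (ln (cosh (x + e)) - ln (cosh x) - e * th x) with ((th (x + c) - th x) * (e - 0)) by lra.
  apply minmax_abs0 in Hc1.
  destruct (MVT_all th (fun x => 1 - th x ^ 2) x (x + c) dth) as [d [_ Hd]].
  rewrite Hd. replace (x + c - x) with c by ring. rewrite !Rabs_mult.
  assert (Rabs (1 - th d ^2) <= 1).
  { generalize (th_bound d); intro. rewrite <- (pow2_abs (th d)).
    generalize (Rabs_pos (th d)); intro. split_Rabs; nra. }
  replace (e - 0) with e by ring. rewrite <- (pow2_abs e).
  generalize (Rabs_pos c) (Rabs_pos e) (Rabs_pos (1 - th d ^ 2)); intros. clear H Hc Hd. assert (Rabs (1 - th d ^ 2) * Rabs c <= Rabs e) by nra. nra.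
Qed.

Lemma fold_plus_shift (l : list R) a : fold_right Rplus a l = fold_right Rplus 0 l + a.
Proof. induction l; simpl. ring. rewrite IHl. ring. Qed.

Lemma sumN_0 f : sumN 0 f = 0.
Proof. reflexivity. Qed.

Lemma sumN_S N f : sumN (S N) f = sumN N f + f (S N).
Proof. unfold sumN. rewrite seq_S, map_app, fold_right_app. simpl.
  rewrite fold_plus_shift. ring. Qed.

Ltac sind N := induction N as [|N IH]; [rewrite ?sumN_0 | rewrite ?sumN_S].

Lemma sumN_ext_in N f h : (forall i, (1 <= i <= N)%nat -> f i = h i) -> sumN N f = sumN N h.
Proof. intro H; sind N; auto. rewrite IH, H; [reflexivity|lia|]. intros; apply H; lia. Qed.

Lemma sumN_plus N f h : sumN N (fun i => f i + h i) = sumN N f + sumN N h.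
Proof. sind N. ring. rewrite IH; ring. Qed.

Lemma sumN_minus N f h : sumN N (fun i => f i - h i) = sumN N f - sumN N h.
Proof. sind N. ring. rewrite IH; ring. Qed.

Lemma sumN_scal N c f : sumN N (fun i => c * f i) = c * sumN N f.
Proof. sind N. ring. rewrite IH; ring. Qed.

Lemma sumN_le N f h : (forall i, (1 <= i <= N)%nat -> f i <= h i) -> sumN N f <= sumN N h.
Proof. intro H; sind N. lra. apply Rplus_le_compat. apply IH; intros; apply H; lia. apply H; lia. Qed.

Lemma sumN_abs N f : Rabs (sumN N f) <= sumN N (fun i => Rabs (f i)).
Proof. sind N. rewrite Rabs_R0; lra. eapply Rle_trans. apply Rabs_triang. lra. Qed.

Lemma sumN_pos N f : (forall i, (1 <= i <= N)%nat -> 0 < f i) -> (1 <= N)%nat -> 0 < sumN N f.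
Proof. intros H HN. destruct N. lia. rewrite sumN_S.
  assert (0 <= sumN N f). { apply Rle_trans with (sumN N (fun _ => 0)).
    clear. sind N; lra. apply sumN_le. intros; left; apply H; lia. }
  generalize (H (S N) ltac:(lia)). lra. Qed.

Lemma rp_pos x c : 0 < Rpower x c.
Proof. unfold Rpower. apply exp_pos. Qed.

Lemma rp_anti c a b : c <= 0 -> 0 < a <= b -> Rpower b c <= Rpower a c.
Proof. intros Hc Hab.
  assert (E: forall x, Rpower x c = / Rpower x (- c)).
  { intro x. rewrite <- Rpower_Ropp. rewrite Ropp_involutive. reflexivity. }
  rewrite !E. apply Rinv_le_contravar. apply rp_pos. apply Rle_Rpower_l; lra. Qed.

Lemma rp_one c : Rpower 1 c = 1.
Proof. unfold Rpower. rewrite ln_1, Rmult_0_r, exp_0. reflexivity. Qed.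

Lemma rp_plus x a b : Rpower x (a + b) = Rpower x a * Rpower x b.
Proof. apply Rpower_plus. Qed.

Lemma rp_m1 x c : 0 < x -> Rpower x (c - 1) = Rpower x c / x.
Proof. intro. unfold Rminus. rewrite rp_plus, Rpower_Ropp, Rpower_1; auto. Qed.

Lemma rp_div x y c : 0 < x -> 0 < y -> Rpower (x / y) c = Rpower x c * Rpower y (- c).
Proof. intros. unfold Rpower. rewrite ln_div by auto. rewrite <- exp_plus. f_equal; ring. Qed.

Lemma rp_sq x c : Rpower x c ^ 2 = Rpower x (2 * c).
Proof. replace (2 * c) with (c + c) by ring. rewrite rp_plus. ring. Qed.



Lemma rp_mvt s x : s < 1 -> 0 < x -> exists m,
  Rpower (x + 1) (s - 1) <= m /\ m <= Rpower x (s - 1) /\ Rpower (x + 1) s - Rpower x s = s * m.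
Proof.
  intros Hs Hx.
  destruct (MVT_gen (fun y => Rpower y s) x (x + 1) (fun y => s * Rpower y (s - 1))) as [c [Hc Heq]].
  - intros y Hy. rewrite Rmin_left in Hy by lra. apply is_derive_Reals.
    apply derivable_pt_lim_power. lra.
  - intros y Hy. rewrite Rmin_left in Hy by lra. apply derivable_continuous_pt.
    exists (s * Rpower y (s - 1)). apply derivable_pt_lim_power. lra.
  - rewrite Rmin_left in Hc by lra. rewrite Rmax_right in Hc by lra.
    exists (Rpower c (s - 1)). split; [|split].
    + apply rp_anti; lra.
    + apply rp_anti; lra.
    + rewrite Heq. ring.
Qed.

Definition P b N := sumN N (fun i => Rpower (INR i) (- b)).

Lemma P_S b N : P b (S N) = P b N + Rpower (INR N + 1) (- b).
Proof. unfold P. rewrite sumN_S, S_INR. reflexivity. Qed.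

Lemma P_0 b : P b 0 = 0.
Proof. reflexivity. Qed.

Lemma INR_pos1 N : 0 < INR N + 1.
Proof. generalize (pos_INR N); lra. Qed.

Lemma P_lower b N : 0 < b < 1 -> Rpower (INR N + 1) (1 - b) - 1 <= (1 - b) * P b N.
Proof. intros Hb. induction N.
  - simpl. rewrite Rplus_0_l, rp_one, P_0. lra.
  - rewrite P_S, S_INR.
    destruct (rp_mvt (1 - b) (INR N + 1) ltac:(lra) (INR_pos1 N)) as [m [H1 [H2 H3]]].
    replace (1 - b - 1) with (- b) in * by ring. nra.
Qed.

Lemma P_upper b N : 0 < b < 1 -> (1 - b) * P b (S N) <= Rpower (INR N + 1) (1 - b) - 1 + (1 - b).
Proof. intros Hb. induction N.
  - rewrite P_S, P_0. simpl. rewrite !Rplus_0_l, !rp_one. lra.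
  - rewrite P_S, !S_INR.
    destruct (rp_mvt (1 - b) (INR N + 1) ltac:(lra) (INR_pos1 N)) as [m [H1 [H2 H3]]].
    replace (1 - b - 1) with (- b) in * by ring. rewrite P_S in IHN. rewrite P_S. assert ((1-b)*Rpower (INR N + 1 + 1) (- b) <= (1-b)*m) by (apply Rmult_le_compat_l; lra). nra.
Qed.

Lemma P_conv p N : 1 < p -> (p - 1) * P p (S N) <= p - Rpower (INR N + 1) (1 - p).
Proof. intros Hp. induction N.
  - rewrite P_S, P_0. simpl. rewrite !Rplus_0_l, !rp_one. lra.
  - rewrite P_S, !S_INR.
    destruct (rp_mvt (1 - p) (INR N + 1) ltac:(lra) (INR_pos1 N)) as [m [H1 [H2 H3]]].
    replace (1 - p - 1) with (- p) in * by ring. rewrite P_S in IHN. rewrite P_S. assert ((1-p)*m <= (1-p)*Rpower (INR N + 1 + 1) (- p)) by (apply Rmult_le_compat_neg_l; lra). nra.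
Qed.

Lemma P_bound p N : 1 < p -> P p N <= p / (p - 1).
Proof. intros Hp. destruct N.
  - rewrite P_0. apply Rlt_le, Rdiv_lt_0_compat; lra.
  - generalize (P_conv p N Hp) (rp_pos (INR N + 1) (1 - p)); intros.
    apply Rmult_le_reg_l with (p - 1). lra. field_simplify; lra.
Qed.

Lemma P_nonneg b N : 0 <= P b N.
Proof. induction N. rewrite P_0; lra. rewrite P_S. generalize (rp_pos (INR N + 1) (-b)). lra. Qed.

Lemma lim_rp_neg s : 0 < s -> is_lim_seq (fun N => Rpower (INR N) (- s)) 0.
Proof.
  intros Hs. apply is_lim_seq_Reals. intros eps Heps.
  destruct (INR_unbounded (Rpower eps (- / s))) as [n0 Hn0].
  exists n0. intros n Hn. unfold R_dist. rewrite Rminus_0_r.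
  rewrite Rabs_right by (apply Rle_ge, Rlt_le, rp_pos).
  assert (Hn' : INR n0 <= INR n) by (apply le_INR; lia).
  assert (Hp := rp_pos eps (- / s)).
  assert (H1 : Rpower (Rpower eps (- / s)) s < Rpower (INR n) s).
  { apply Rlt_Rpower_l; lra. }
  rewrite Rpower_mult in H1. replace (- / s * s) with (- (1)) in H1 by (field; lra).
  rewrite Rpower_Ropp, Rpower_1 in H1 by lra.
  rewrite Rpower_Ropp. replace eps with (/ / eps) by (field; lra).
  apply Rinv_lt_contravar. apply Rmult_lt_0_compat. apply Rinv_0_lt_compat; lra. apply rp_pos.
  exact H1.
Qed.

Lemma lim_affine (q : nat -> R) A B : is_lim_seq q 0 -> is_lim_seq (fun n => A + B * q n) A.
Proof. intros H.
  assert (H2 := is_lim_seq_plus' _ _ A (B * 0) (is_lim_seq_const A) (is_lim_seq_scal_l q B 0 H)).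
  replace (A + B * 0) with A in H2 by ring. exact H2. Qed.

Lemma lim_avg b : 0 < b < 1 -> is_lim_seq (fun N => Rpower (INR N) (b - 1) * P b N) (1 / (1 - b)).
Proof.
  intros Hb. set (s := 1 - b).
  assert (Hq : is_lim_seq (fun N => Rpower (INR N) (b - 1)) 0).
  { replace (b - 1) with (- s) by (unfold s; ring). apply lim_rp_neg. unfold s; lra. }
  apply is_lim_seq_le_le_loc with
    (u := fun N => 1 / s + (- / s) * Rpower (INR N) (b - 1))
    (w := fun N => 1 / s + (1 - / s) * Rpower (INR N) (b - 1)).
  - exists 1%nat. intros N HN. destruct N as [|M]. lia.
    assert (HNpos : 0 < INR (S M)) by (apply lt_0_INR; lia).
    set (q := Rpower (INR (S M)) (b - 1)).
    assert (Hq1 : q * Rpower (INR (S M)) s = 1).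
    { unfold q. rewrite <- rp_plus. replace (b - 1 + s) with 0 by (unfold s; ring).
      apply Rpower_O; auto. }
    assert (Hqp : 0 < q) by apply rp_pos.
    split.
    + assert (L := P_lower b (S M) Hb). fold s in L.
      assert (Rpower (INR (S M)) s <= Rpower (INR (S M) + 1) s)
        by (apply Rle_Rpower_l; unfold s; lra).
      assert (HsP : Rpower (INR (S M)) s - 1 <= s * P b (S M)) by lra.
      assert (Hs : 0 < s) by (unfold s; lra).
      apply Rmult_le_reg_l with s; auto.
      replace (s * (1 / s + - / s * q)) with (1 - q) by (field; lra).
      replace (s * (q * P b (S M))) with (q * (s * P b (S M))) by ring.
      apply Rle_trans with (q * (Rpower (INR (S M)) s - 1)).
      nra. apply Rmult_le_compat_l; lra.
    + assert (U := P_upper b M Hb). fold s in U. rewrite <- S_INR in U.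
      assert (Hs : 0 < s) by (unfold s; lra).
      apply Rmult_le_reg_l with s; auto.
      replace (s * (1 / s + (1 - / s) * q)) with (1 - q + s * q) by (field; lra).
      replace (s * (q * P b (S M))) with (q * (s * P b (S M))) by ring.
      apply Rle_trans with (q * (Rpower (INR (S M)) s - 1 + s)).
      apply Rmult_le_compat_l; lra. nra.
  - apply lim_affine; auto.
  - apply lim_affine; auto.
Qed.

Lemma INR_pos N : (1 <= N)%nat -> 0 < INR N.
Proof. intro; apply lt_0_INR; lia. Qed.

Lemma P_pos b N : (1 <= N)%nat -> 0 < P b N.
Proof. intros. unfold P. apply sumN_pos; auto. intros; apply rp_pos. Qed.

Lemma EWN_eq tau cw N a : a = 1 / (tau - 1) -> (1 <= N)%nat ->
  EWN tau cw N = cw * (Rpower (INR N) (a - 1) * P a N).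
Proof.
  intros Ha HN. unfold EWN, wgt. rewrite <- Ha. unfold P.
  rewrite (sumN_ext_in N _ (fun i => (cw * Rpower (INR N) a) * Rpower (INR i) (- a))).
  - rewrite sumN_scal, rp_m1 by (apply INR_pos; auto). field. apply Rgt_not_eq, INR_pos; auto.
  - intros i Hi. rewrite rp_div by (apply INR_pos; lia). ring.
Qed.

Lemma EWN2_eq tau cw N a : a = 1 / (tau - 1) -> (1 <= N)%nat ->
  EWN2 tau cw N = cw ^ 2 * (Rpower (INR N) (2 * a - 1) * P (2 * a) N).
Proof.
  intros Ha HN. unfold EWN2, wgt. rewrite <- Ha. unfold P.
  rewrite (sumN_ext_in N _ (fun i => (cw ^ 2 * Rpower (INR N) (2 * a)) * Rpower (INR i) (- (2 * a)))).
  - rewrite sumN_scal, rp_m1 by (apply INR_pos; auto). field. apply Rgt_not_eq, INR_pos; auto.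
  - intros i Hi. rewrite rp_div by (apply INR_pos; lia).
    replace (- (2 * a)) with (2 * (- a)) by ring. rewrite <- !rp_sq. ring.
Qed.

Lemma sinh_asinh y : sinh (asinh y) = y.
Proof.
  unfold asinh, sinh.
  assert (Hs : Rabs y < sqrt (y ^ 2 + 1)).
  { apply Rsqr_incrst_0. rewrite Rsqr_sqrt by nra. rewrite <- Rsqr_abs. unfold Rsqr. nra.
    apply Rabs_pos. apply sqrt_pos. }
  assert (Hp : 0 < y + sqrt (y ^ 2 + 1)) by (split_Rabs; lra).
  rewrite exp_Ropp, exp_ln by auto.
  assert (Hq : sqrt (y ^ 2 + 1) * sqrt (y ^ 2 + 1) = y ^ 2 + 1) by (apply sqrt_sqrt; nra).
  set (q := sqrt (y ^ 2 + 1)) in *.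
  field_simplify; [|lra]. replace (q ^ 2) with (y ^ 2 + 1) by (rewrite <- Hq; ring).
  field. lra.
Qed.

Definition T2 a N := Rpower (INR N) (2 * a - 1) * P (2 * a) N.
Definition T1 a N := Rpower (INR N) (a - 1) * P a N.

Lemma T2_pos a N : (1 <= N)%nat -> 0 < T2 a N.
Proof. intros. unfold T2. apply Rmult_lt_0_compat. apply rp_pos. apply P_pos; auto. Qed.
Lemma T1_pos a N : (1 <= N)%nat -> 0 < T1 a N.
Proof. intros. unfold T1. apply Rmult_lt_0_compat. apply rp_pos. apply P_pos; auto. Qed.

Lemma alpha_eq tau cw N a : a = 1 / (tau - 1) -> (1 <= N)%nat -> 0 < cw ->
  alphaN tau cw (betacN tau cw N) N * cw = sqrt (/ T2 a N).
Proof.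
  intros Ha HN Hc. unfold alphaN, betacN. rewrite sinh_asinh. unfold nuN.
  rewrite (EWN_eq tau cw N a), (EWN2_eq tau cw N a) by auto. fold (T1 a N) (T2 a N).
  assert (H1 := T1_pos a N HN). assert (H2 := T2_pos a N HN).
  replace (/ (cw ^ 2 * T2 a N / (cw * T1 a N)) / (cw * T1 a N)) with (/ T2 a N / cw ^ 2)
    by (field; repeat split; lra).
  assert (0 < / T2 a N) by (apply Rinv_0_lt_compat; auto).
  assert (0 < / T2 a N / cw ^ 2) by (apply Rdiv_lt_0_compat; nra).
  apply Rsqr_inj.
  - apply Rmult_le_pos. apply sqrt_pos. lra.
  - apply sqrt_pos.
  - unfold Rsqr. replace (sqrt (/ T2 a N / cw ^ 2) * cw * (sqrt (/ T2 a N / cw ^ 2) * cw))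
      with ((sqrt (/ T2 a N / cw ^ 2) * sqrt (/ T2 a N / cw ^ 2)) * cw ^ 2) by ring.
    rewrite !sqrt_sqrt by lra. field. lra.
Qed.

Lemma GN_eq tau cw N a z r : 1 < tau -> a = 1 / (tau - 1) -> (1 <= N)%nat -> 0 < cw ->
  INR N * GN tau cw (betacN tau cw N) ((tau - 2) / (tau - 1)) N (z / Rpower (INR N) (1 / (tau - 1))) r
  = sumN N (fun i => g (sqrt (/ T2 a N) * z * Rpower (INR i) (- a)))
    - sumN N (fun i => ln (cosh (sqrt (/ T2 a N) * z * Rpower (INR i) (- a) + r * Rpower (INR N) (a - 1)))
                       - ln (cosh (sqrt (/ T2 a N) * z * Rpower (INR i) (- a)))).
Proof.
  intros Ht Ha HN Hc. assert (HNp := INR_pos N HN).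
  assert (Hta : tau - 1 <> 0) by lra.
  unfold GN. rewrite <- Ha.
  rewrite (sumN_ext_in N _ (fun i => ln (cosh (sqrt (/ T2 a N) * z * Rpower (INR i) (- a) + r * Rpower (INR N) (a - 1))))).
  2: { intros i Hi. f_equal. f_equal. rewrite <- (alpha_eq tau cw N a) by auto.
       unfold wgt. rewrite <- Ha. rewrite rp_div by (apply INR_pos; lia).
       replace ((tau - 2) / (tau - 1)) with (- (a - 1)) by (rewrite Ha; field; auto).
       rewrite (Rpower_Ropp (INR N) (a - 1)). assert (0 < Rpower (INR N) a) by apply rp_pos.
       assert (0 < Rpower (INR N) (a - 1)) by apply rp_pos. field. lra. }
  unfold g. rewrite sumN_minus, sumN_minus.
  rewrite (sumN_ext_in N (fun i => / 2 * (sqrt (/ T2 a N) * z * Rpower (INR i) (- a)) ^ 2)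
                        (fun i => (/ 2 * (sqrt (/ T2 a N)) ^ 2 * z ^ 2) * Rpower (INR i) (- (2 * a)))).
  2: { intros i Hi. replace (- (2 * a)) with (2 * (- a)) by ring. rewrite <- rp_sq. ring. }
  rewrite sumN_scal. fold (P (2 * a) N).
  assert (HT := T2_pos a N HN).
  rewrite (pow2_sqrt (/ T2 a N)) by (apply Rlt_le, Rinv_0_lt_compat; auto).
  unfold T2. rewrite rp_m1 by auto. replace (2 * a) with (a + a) by ring. rewrite rp_plus.
  assert (0 < Rpower (INR N) a) by apply rp_pos. assert (HP := P_pos (a + a) N HN).
  field. repeat split; lra.
Qed.

Lemma sumN_const N c : sumN N (fun _ => c) = INR N * c.
Proof. induction N. rewrite sumN_0. simpl; ring. rewrite sumN_S, IHN, S_INR. ring. Qed.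

Lemma B_bound a N z r : (1 <= N)%nat ->
  Rabs (sumN N (fun i => ln (cosh (sqrt (/ T2 a N) * z * Rpower (INR i) (- a) + r * Rpower (INR N) (a - 1)))
                       - ln (cosh (sqrt (/ T2 a N) * z * Rpower (INR i) (- a))))
        - r * sqrt (/ T2 a N) * z * T1 a N)
  <= r ^ 2 * Rpower (INR N) (2 * a - 1) + Rabs r * z ^ 2 * Rpower (INR N) (- a).
Proof.
  intros HN. assert (HNp := INR_pos N HN). assert (HT := T2_pos a N HN).
  set (k := sqrt (/ T2 a N)). set (e := r * Rpower (INR N) (a - 1)).
  set (x := fun i => k * z * Rpower (INR i) (- a)).
  assert (Hex : r * k * z * T1 a N = e * sumN N x).
  { unfold x, e, T1.
    rewrite sumN_scal. unfold P. ring. }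
  change (fun i => ln (cosh (k * z * Rpower (INR i) (- a) + e)) - ln (cosh (k * z * Rpower (INR i) (- a))))
    with (fun i => ln (cosh (x i + e)) - ln (cosh (x i))).
  rewrite Hex. rewrite <- sumN_scal, <- sumN_minus.
  eapply Rle_trans. apply sumN_abs.
  eapply Rle_trans. apply (sumN_le N _ (fun i => e ^ 2 + Rabs e * x i ^ 2)).
  { intros i Hi. replace (ln (cosh (x i + e)) - ln (cosh (x i)) - e * x i)
      with ((ln (cosh (x i + e)) - ln (cosh (x i)) - e * th (x i)) - e * (x i - th (x i))) by ring.
    assert (Hab: forall u v, Rabs (u - v) <= Rabs u + Rabs v) by (intros; split_Rabs; lra).
    eapply Rle_trans. apply Hab. rewrite Rabs_mult.
    apply Rplus_le_compat. apply L_taylor. apply Rmult_le_compat_l. apply Rabs_pos. apply phi_sq. }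
  rewrite sumN_plus, sumN_const.
  rewrite (sumN_ext_in N _ (fun i => (Rabs e * k ^ 2 * z ^ 2) * Rpower (INR i) (- (2 * a)))).
  2: { intros i Hi. unfold x. replace (- (2 * a)) with (2 * (- a)) by ring. rewrite <- rp_sq. ring. }
  rewrite sumN_scal. fold (P (2 * a) N).
  unfold k. rewrite (pow2_sqrt (/ T2 a N)) by (apply Rlt_le, Rinv_0_lt_compat; auto).
  unfold e. rewrite Rabs_mult, (Rabs_right (Rpower (INR N) (a - 1))) by (apply Rle_ge, Rlt_le, rp_pos).
  unfold T2. assert (HP := P_pos (2 * a) N HN).
  assert (E1 : Rpower (INR N) (a - 1) = Rpower (INR N) (2 * a - 1) * Rpower (INR N) (- a)).
  { rewrite <- rp_plus. f_equal. ring. }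
  assert (E2 : Rpower (INR N) (a - 1) ^ 2 = Rpower (INR N) (2 * a - 1) / INR N).
  { rewrite rp_sq, <- rp_m1 by auto. f_equal. ring. }
  assert (0 < Rpower (INR N) (2 * a - 1)) by apply rp_pos.
  right. replace ((r * Rpower (INR N) (a - 1)) ^ 2) with (r ^ 2 * Rpower (INR N) (a - 1) ^ 2) by ring. rewrite E2, E1. field. split; lra.
Qed.

Lemma rp_4 x c : Rpower x c ^ 4 = Rpower x (4 * c).
Proof. replace (Rpower x c ^ 4) with ((Rpower x c ^ 2) ^ 2) by ring. rewrite !rp_sq. f_equal. ring. Qed.

Lemma A_bound a N z k q : 1 < 4 * a -> 0 <= k -> 0 <= q ->
  Rabs (sumN N (fun i => g (k * z * Rpower (INR i) (- a))) - sumN N (fun i => g (q * z * Rpower (INR i) (- a))))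
  <= (k + q) ^ 3 * Rabs (k - q) * z ^ 4 * (4 * a / (4 * a - 1)).
Proof.
  intros Ha Hk Hq. rewrite <- sumN_minus.
  eapply Rle_trans. apply sumN_abs.
  eapply Rle_trans. apply (sumN_le N _ (fun i => ((k + q) ^ 3 * Rabs (k - q) * z ^ 4) * Rpower (INR i) (- (4 * a)))).
  - intros i Hi. eapply Rle_trans. apply g_lip.
    set (t := Rpower (INR i) (- a)). assert (Ht : 0 < t) by apply rp_pos.
    replace (k * z * t - q * z * t) with ((k - q) * z * t) by ring.
    rewrite !Rabs_mult, (Rabs_right k), (Rabs_right q), (Rabs_right t) by lra.
    replace (- (4 * a)) with (4 * (- a)) by ring. rewrite <- rp_4. fold t.
    replace (z ^ 4) with (Rabs z ^ 4) by (replace (z ^ 4) with ((z ^ 2) ^ 2) by ring; rewrite <- (pow2_abs z); ring).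
    right. ring.
  - rewrite sumN_scal. fold (P (4 * a) N). apply Rmult_le_compat_l.
    + apply Rmult_le_pos. apply Rmult_le_pos. apply pow_le; lra. apply Rabs_pos.
      replace (z ^ 4) with ((z ^ 2) ^ 2) by ring. apply pow2_ge_0.
    + apply P_bound; auto.
Qed.

Lemma S_bound a N y : 1 < 4 * a ->
  sumN N (fun i => g (y * Rpower (INR i) (- a))) <= y ^ 4 * (4 * a / (4 * a - 1)).
Proof.
  intros Ha. eapply Rle_trans. apply (sumN_le N _ (fun i => y ^ 4 * Rpower (INR i) (- (4 * a)))).
  - intros i Hi. eapply Rle_trans. apply g_bound. replace (- (4 * a)) with (4 * (- a)) by ring.
    rewrite <- rp_4. right; ring.
  - rewrite sumN_scal. fold (P (4 * a) N). apply Rmult_le_compat_l.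
    replace (y ^ 4) with ((y ^ 2) ^ 2) by ring. apply pow2_ge_0.
    apply P_bound; auto.
Qed.

Lemma sum_f_sumN (h : nat -> R) n : sum_f_R0 (fun k => h (S k)) n = sumN (S n) h.
Proof. induction n. simpl. rewrite sumN_S, sumN_0. ring. simpl sum_f_R0. rewrite IHn, (sumN_S (S n)). reflexivity. Qed.

Lemma squeeze_abs (u v w : nat -> R) (l : R) : is_lim_seq v l -> is_lim_seq w 0 ->
  (forall n, (1 <= n)%nat -> Rabs (u n - v n) <= w n) -> is_lim_seq u l.
Proof.
  intros Hv Hw H.
  apply is_lim_seq_le_le_loc with (u := fun n => v n - w n) (w := fun n => v n + w n).
  - exists 1%nat. intros n Hn. specialize (H n Hn). split_Rabs; lra.
  - replace (Finite l) with (Finite (l - 0)) by (f_equal; ring). apply is_lim_seq_minus'; auto.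
  - replace (Finite l) with (Finite (l + 0)) by (f_equal; ring). apply is_lim_seq_plus'; auto.
Qed.

Theorem mainTheorem12 (tau cw z r : R) :
  3 < tau < 5 -> 0 < cw ->
  exists fval : R,
    infinite_sum (fun k => fterm tau (sqrt (EW tau cw / nu tau cw) * z) (S k)) fval /\
    Un_cv
      (fun N : nat =>
         INR N * GN tau cw (betacN tau cw N) ((tau - 2) / (tau - 1)) N
                   (z / Rpower (INR N) (1 / (tau - 1))) r)
      (- z * r * sqrt (EW tau cw / nu tau cw) + fval).
Proof.
  intros [Ht3 Ht5] Hc.
  pose (a := 1 / (tau - 1)). assert (Ha : a = 1 / (tau - 1)) by reflexivity.
  assert (Ha1 : 1 < 4 * a) by (unfold a; apply Rmult_lt_reg_r with (tau - 1); [lra|]; field_simplify; lra).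
  assert (Ha2 : 2 * a < 1) by (unfold a; apply Rmult_lt_reg_r with (tau - 1); [lra|]; field_simplify; lra).
  pose (kap := sqrt (1 - 2 * a)).
  assert (Hkap : 0 <= kap) by apply sqrt_pos.
  assert (Hkey : sqrt (EW tau cw / nu tau cw) = kap / (1 - a)).
  { assert (Hk2 : kap ^ 2 = 1 - 2 * a) by (apply pow2_sqrt; lra).
    rewrite <- (sqrt_pow2 (kap / (1 - a))) by (apply Rmult_le_pos; [lra | apply Rlt_le, Rinv_0_lt_compat; lra]).
    f_equal. unfold Rdiv at 2. rewrite Rpow_mult_distr, Hk2.
    unfold nu, EW2, EW. rewrite Ha. field. repeat split; lra. }
  pose (h := fun i : nat => g (kap * z * Rpower (INR i) (- a))).
  assert (Hft : forall i, fterm tau (sqrt (EW tau cw / nu tau cw) * z) i = h i).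
  { intro i. unfold fterm, h, g. cbv zeta. rewrite Hkey.
    replace ((tau - 2) / (tau - 1) * (kap / (1 - a) * z) * Rpower (INR i) (- (1 / (tau - 1))))
      with (kap * z * Rpower (INR i) (- a)). reflexivity. rewrite Ha. field. split; lra. }
  pose (u := fun n => sum_f_R0 (fun k => h (S k)) n).
  assert (Hu : forall n, u n = sumN (S n) h) by (intro; apply sum_f_sumN).
  destruct (growing_cv u) as [fval Hf].
  { intro n. unfold u. simpl. generalize (g_nonneg (kap * z * Rpower (INR (S (S n))) (- a))). unfold h. lra. }
  { exists ((kap * z) ^ 4 * (4 * a / (4 * a - 1))). intros x [n ->].
    rewrite Hu. unfold h. 
    apply S_bound; auto. }
  exists fval. split.
  { unfold infinite_sum. apply is_lim_seq_Reals. apply is_lim_seq_Reals in Hf.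
    eapply is_lim_seq_ext; [|exact Hf]. intro n. unfold u. apply sum_eq. intros; rewrite Hft; reflexivity. }
  apply is_lim_seq_Reals.
  assert (Ha0 : 0 < a) by (unfold a; apply Rdiv_lt_0_compat; lra).
  pose (kN := fun N => sqrt (/ T2 a N)).
  assert (LT2 : is_lim_seq (T2 a) (1 / (1 - 2 * a))).
  { unfold T2. apply lim_avg. lra. }
  assert (Hl2 : 0 < 1 / (1 - 2 * a)) by (apply Rdiv_lt_0_compat; lra).
  assert (Lk : is_lim_seq kN kap).
  { assert (H1 := is_lim_seq_inv _ _ LT2).
    assert (H2 : is_lim_seq (fun n => / T2 a n) (1 - 2 * a)).
    { replace (1 - 2 * a) with (/ (1 / (1 - 2 * a))) by (field; lra). apply H1.
      intro E. apply Rbar_finite_eq in E. lra. }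
    apply (is_lim_seq_continuous sqrt _ (1 - 2 * a)) in H2. exact H2.
    apply continuity_pt_sqrt; lra. }
  assert (LT1 : is_lim_seq (T1 a) (1 / (1 - a))) by (unfold T1; apply lim_avg; lra).
  pose (B := fun N => sumN N (fun i => ln (cosh (kN N * z * Rpower (INR i) (- a) + r * Rpower (INR N) (a - 1)))
                                       - ln (cosh (kN N * z * Rpower (INR i) (- a))))).
  assert (LB : is_lim_seq B (r * kap * z * (1 / (1 - a)))).
  { apply squeeze_abs with (v := fun N => r * kN N * z * T1 a N)
      (w := fun N => r ^ 2 * Rpower (INR N) (2 * a - 1) + Rabs r * z ^ 2 * Rpower (INR N) (- a)).
    - apply is_lim_seq_mult'; [|exact LT1]. apply is_lim_seq_mult'; [|apply is_lim_seq_const].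
      apply is_lim_seq_mult'; [apply is_lim_seq_const| exact Lk].
    - replace (Finite 0) with (Finite (r ^ 2 * 0 + Rabs r * z ^ 2 * 0)) by (f_equal; ring).
      apply is_lim_seq_plus'; apply is_lim_seq_mult'; try apply is_lim_seq_const.
      replace (2 * a - 1) with (- (1 - 2 * a)) by ring. apply lim_rp_neg; lra.
      apply lim_rp_neg; lra.
    - intros N HN. apply B_bound; auto. }
  pose (A := fun N => sumN N (fun i => g (kN N * z * Rpower (INR i) (- a)))).
  assert (LS : is_lim_seq (fun N => sumN N h) fval).
  { apply is_lim_seq_incr_1. apply is_lim_seq_Reals in Hf. eapply is_lim_seq_ext; [|exact Hf].
    intro n; apply Hu. }
  assert (LA : is_lim_seq A fval).
  { apply squeeze_abs with (v := fun N => sumN N h)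
      (w := fun N => (kN N + kap) ^ 3 * Rabs (kN N - kap) * z ^ 4 * (4 * a / (4 * a - 1))).
    - exact LS.
    - assert (L0 : is_lim_seq (fun N => kN N - kap) 0).
      { replace (Finite 0) with (Finite (kap - kap)) by (f_equal; ring).
        apply is_lim_seq_minus'; [exact Lk | apply is_lim_seq_const]. }
      apply is_lim_seq_abs in L0. simpl in L0. rewrite Rabs_R0 in L0.
      assert (L3 : is_lim_seq (fun N => (kN N + kap) ^ 3) ((kap + kap) ^ 3)).
      { apply (is_lim_seq_continuous (fun x => (x + kap) ^ 3)); [|exact Lk].
        apply derivable_continuous_pt. reg. }
      replace (Finite 0) with (Finite ((kap + kap) ^ 3 * 0 * z ^ 4 * (4 * a / (4 * a - 1)))) by (f_equal; ring).
      apply is_lim_seq_mult'; [|apply is_lim_seq_const].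
      apply is_lim_seq_mult'; [|apply is_lim_seq_const].
      apply is_lim_seq_mult'; auto.
    - intros N HN. apply A_bound; auto. apply sqrt_pos. }
  apply is_lim_seq_ext_loc with (u := fun N => A N - B N).
  { exists 1%nat. intros N HN. unfold A, B, kN. symmetry. apply (GN_eq tau cw N a z r); auto; lra. }
  replace (- z * r * sqrt (EW tau cw / nu tau cw) + fval) with (fval - r * kap * z * (1 / (1 - a)))
    by (rewrite Hkey; field; lra).
  apply is_lim_seq_minus'; auto.
Qed.
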